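(* Let $G=(V,E)$ be a finite connected graph and $P$ the transition matrix of an irreducible recurrent Markov chain on $G$. If $\eta$ is a golf process on $G$ with $|B^0|\le|H^0|$, then $\eta$ is valid. The same holds if $G$ is infinite (with countable vertex set), provided $|B^0|\le|H^0|$ and $|B^0|$ is finite.
   Context: Golf process on $G$: $P=(P_{u,v})$ with $P_{u,v}>0$ only if $\{u,v\}\in E$. The initial configuration (random or deterministic) consists of disjoint sets $B^0$ (vertices containing a ball) and $H^0$ (free holes); other vertices are neutral. Each vertex $v$ has an activation clock $C(v)\in(0,1)$, the clocks being a.s. pairwise distinct (e.g. i.i.d. uniform). At time $C(v)$, if $v$ contains a ball, the ball performs a $P$-random walk from $v$ (independent of everything else), stopped at the first time it is at a hole that is free at that time; it fills that hole and both $v$ and the hole become neutral. If the walk never hits a free hole, the whole process becomes frozen (all vertices set to a cemetery state $\ast$ until time $1$). Configurations lie in $\mathcal{S}=\{\text{hole},0,\text{ball},\ast\}^V$ with the product topology. The process is valid if it is almost surely well-defined and not frozen at time $1$, is measurable, and almost surely belongs to $D_{\mathcal{S}}[0,1]$, the càdlàg functions $[0,1]\to\mathcal{S}$ with the Skorokhod topology. *)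

(* Defs.v *)
From HB Require Import structures.
From mathcomp Require Import all_boot all_order all_algebra.
From mathcomp Require Import all_classical all_reals all_analysis.
From mathcomp Require Import finmap.
From Stdlib Require Import Relations.

Set Implicit Arguments.
Unset Strict Implicit.
Unset Printing Implicit Defensive.
Import Order.TTheory GRing.Theory Num.Theory.
Local Open Scope classical_set_scope.
Local Open Scope ring_scope.

(** States of a vertex: free hole, neutral (0), ball, cemetery (frozen). *)
Inductive site := SHole | SZero | SBall | SStar.

Section Graph.
Variables (R : realType) (V : countType).

Definition graph_rel (E : rel V) := forall u v, E u v = E v u.

Definition connected_graph (E : rel V) :=
  forall u v, clos_refl_trans V (fun x y => E x y) u v.

Definition transition_on (E : rel V) (P : V -> V -> R) :=
  (forall u v, 0 <= P u v) /\
  (forall u v, 0 < P u v -> E u v) /\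
  (forall u, (\esum_(w in [set: V]) (P u w)%:E = 1)%E).

Definition irreducible (P : V -> V -> R) :=
  forall u v, exists n (x : nat -> V), x 0%N = u /\ x n = v /\
    forall i, (i < n)%N -> 0 < P (x i) (x i.+1).

(** first passage probabilities f_n(u,v) = P_u(T_v^+ = n) *)
Fixpoint first_passage (P : V -> V -> R) (n : nat) : V -> V -> \bar R :=
  match n with
  | 0%N => fun _ _ => 0%E
  | m.+1 => fun u v =>
      match m with
      | 0%N => (P u v)%:E
      | _ => (\esum_(w in [set w | w != v]) ((P u w)%:E * first_passage P m w v))%E
      end
  end.

Definition recurrent (P : V -> V -> R) :=
  forall u, (\esum_(n in [set n : nat | (0 < n)%N]) first_passage P n u u = 1)%E.

End Graph.

Section Golf.
Variables (R : realType) (V : countType) (d : measure_display)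
  (Omega : measurableType d) (Pr : probability Omega R).

Definition independent_family (I : choiceType) (F : I -> set (set Omega)) :=
  forall (J : {fset I}) (A : I -> set Omega),
    (forall i, i \in J -> F i (A i)) ->
    Pr (\bigcap_(i in [set` J]) A i) = (\prod_(i <- J) Pr (A i))%E.

Variables (init : V -> Omega -> site) (C : V -> Omega -> R)
  (W : V -> nat -> Omega -> V).

Definition sigma_init : set (set Omega) :=
  <<s setT, [set A | (exists v (B : set R), measurable B /\ A = C v @^-1` B) \/
                     (exists v s, A = [set w | init v w = s])] >>.

Definition sigma_walk (v : V) : set (set Omega) :=
  <<s setT, [set A | exists n u, A = [set w | W v n w = u]] >>.

Definition golf_sigma (i : option V) : set (set Omega) :=
  match i with None => sigma_init | Some v => sigma_walk v end.

(** A golf process with transition matrix P, initial configuration [init]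
    (B^0 = balls, H^0 = holes), clocks [C], and for every vertex v the
    P-random walk [W v] that the ball at v (if any) performs. *)
Definition golf_process (P : V -> V -> R) :=
  (forall v w, init v w <> SStar) /\
  (forall v s, measurable [set w | init v w = s]) /\
  (forall v, measurable_fun setT (C v)) /\
  (forall v w, 0 < C v w < 1) /\
  {ae Pr, forall w, forall u v, u != v -> C u w != C v w} /\
  (forall v n u, measurable [set w | W v n w = u]) /\
  (forall v (x : nat -> V) n,
     Pr [set w | forall i, (i <= n)%N -> W v i w = x i] =
     ((x 0%N == v)%:R * \prod_(i < n) P (x i) (x i.+1))%:E) /\
  independent_family golf_sigma.

Definition B0 (w : Omega) : set V := [set v | init v w = SBall].
Definition H0 (w : Omega) : set V := [set v | init v w = SHole].

Definition well_defined (w : Omega) :=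
  finite_set (B0 w) /\ (forall u v, u != v -> C u w != C v w).

Definition minball (w : Omega) (c : V -> site) (v : V) :=
  c v = SBall /\ forall u, c u = SBall -> C v w <= C u w.

Definition step (w : Omega) (c : V -> site) : V -> site :=
  match pselect (exists v, minball w c v) with
  | left H =>
      let v := projT1 (cid H) in
      match pselect (exists n, c (W v n w) = SHole) with
      | left Hn =>
          let n := @ex_minn (fun n => `[< c (W v n w) = SHole >])
                     (let: ex_intro n Hn' := Hn in
                      ex_intro _ n (asboolT Hn')) in
          let h := W v n w in
          fun u => if (u == v) || (u == h) then SZero else c u
      | right _ => fun _ => SStar
      end
  | right _ => c
  end.

Definition nactivated (w : Omega) (t : R) : nat :=
  size (fset_set [set v | init v w = SBall /\ C v w <= t]).

Definition golf (w : Omega) (t : R) : V -> site :=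
  if `[< well_defined w >] then iter (nactivated w t) (step w) (init^~ w)
  else fun _ => SStar.

Definition cadlag01_discrete (T : Type) (f : R -> T) :=
  (forall t, 0 <= t < 1 -> exists2 e, 0 < e &
     forall s, t <= s < t + e -> f s = f t) /\
  (forall t, 0 < t <= 1 -> exists2 e, 0 < e &
     exists l, forall s, t - e < s < t -> f s = l).

Definition valid :=
  (* measurability (coordinate sigma-algebra of D_S[0,1]) *)
  (forall t, 0 <= t <= 1 -> forall v s, measurable [set w | golf w t v = s]) /\
  {ae Pr, forall w,
     well_defined w /\
     (forall v, golf w 1 v <> SStar) /\
     (forall v, cadlag01_discrete (fun t => golf w t v))}.

End Golf.

(* Main.v *)
Require Import Defs.
From HB Require Import structures.
From mathcomp Require Import all_boot all_order all_algebra.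
From mathcomp Require Import all_classical all_reals all_analysis.
From mathcomp Require Import finmap.
Set Implicit Arguments. Unset Strict Implicit. Unset Printing Implicit Defensive.
Import Order.TTheory GRing.Theory Num.Theory.
Local Open Scope classical_set_scope.
Local Open Scope ring_scope.

Module PartA.
Local Open Scope ereal_scope.

Definition unp (I : countType) (T : Type) (d0 : T) (f : I -> T) (n : nat) : T :=
  match (choice.unpickle n : option I) with Some i => f i | None => d0 end.

Lemma unp_pickle (I : countType) (T : Type) (d0 : T) (f : I -> T) i :
  unp d0 f (choice.pickle i) = f i.
Proof. by rewrite /unp choice.pickleK. Qed.

Lemma esum_count (R : realType) (I : countType) (S : set I) (a : I -> \bar R) :
  (forall i, S i -> 0 <= a i) ->
  \esum_(i in S) a i = \sum_(n <oo | n \in choice.pickle @` S) unp 0 a n.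
Proof.
move=> a0; rewrite nneseries_esum; last first.
  by move=> n /set_mem [i Si <-]; rewrite unp_pickle; exact: a0.
rewrite set_mem_set esum_image; last by move=> x y _ _; exact: (pcan_inj choice.pickleK).
by apply: eq_esum => i _; rewrite unp_pickle.
Qed.

Lemma esumZl_count (R : realType) (I : countType) (S : set I) (a : I -> \bar R) (c : R) : (0 <= c)%R ->
  (forall i, S i -> 0 <= a i) ->
  \esum_(i in S) (c%:E * a i) = c%:E * \esum_(i in S) a i.
Proof.
move=> c0 a0; rewrite !esum_count//; last by move=> i Si; rewrite mule_ge0// a0.
rewrite -nneseriesZl; last by move=> n /set_mem [i Si <-]; rewrite unp_pickle a0.
apply: eq_eseriesr => n _; rewrite /unp; case: (choice.unpickle n) => //=; by rewrite mule0.
Qed.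

Lemma measure_esum_count d (T : measurableType d) (R : realType)
  (mu : {measure set T -> \bar R}) (I : countType) (S : set I) (F : I -> set T) :
  (forall i, S i -> measurable (F i)) -> trivIset S F ->
  mu (\bigcup_(i in S) F i) = \esum_(i in S) mu (F i).
Proof.
move=> mF tF.
have -> : \bigcup_(i in S) F i = \bigcup_(n in choice.pickle @` S) unp set0 F n.
  apply/seteqP; split=> x.
    by move=> [i Si Fx]; exists (choice.pickle i); [exists i|rewrite unp_pickle].
  by move=> [_ [i Si <-]]; rewrite unp_pickle => Fx; exists i.
rewrite measure_bigcup; last first.
- move=> _ _ [i Si <-] [j Sj <-]; rewrite !unp_pickle => h.
  by rewrite (tF i j Si Sj h).
- by move=> _ [i Si <-]; rewrite unp_pickle; exact: mF.
rewrite esum_count//.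
apply: eq_eseriesr => n _; rewrite /unp; case: (choice.unpickle n) => //=.
Qed.

End PartA.
Import PartA.

Module PartB.
Local Open Scope ereal_scope.

Lemma bigcup_count_measurable d (T : measurableType d) (I : countType) (S : set I)
  (F : I -> set T) :
  (forall i, S i -> measurable (F i)) -> measurable (\bigcup_(i in S) F i).
Proof.
move=> mF.
have -> : \bigcup_(i in S) F i = \bigcup_(n in choice.pickle @` S) unp set0 F n.
  apply/seteqP; split=> x.
    by move=> [i Si Fx]; exists (choice.pickle i); [exists i|rewrite unp_pickle].
  by move=> [_ [i Si <-]]; rewrite unp_pickle => Fx; exists i.
by apply: bigcup_measurable => _ [i Si <-]; rewrite unp_pickle; exact: mF.
Qed.

Lemma bigcap_count_measurable d (T : measurableType d) (I : countType) (S : set I)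
  (F : I -> set T) :
  (forall i, S i -> measurable (F i)) -> measurable (\bigcap_(i in S) F i).
Proof.
move=> mF; rewrite -[X in measurable X]setCK setC_bigcap; apply: measurableC.
by apply: bigcup_count_measurable => i Si; apply: measurableC; exact: mF.
Qed.

Section Markov.
Variables (R : realType) (V : countType) (d : measure_display)
  (Omega : measurableType d) (Pr : probability Omega R) (P : V -> V -> R)
  (W : V -> nat -> Omega -> V).
Hypothesis P0 : forall u v, (0 <= P u v)%R.
Hypothesis Wm : forall v n u, measurable [set w | W v n w = u].
Hypothesis Wlaw : forall v (x : nat -> V) n,
     Pr [set w | forall i, (i <= n)%N -> W v i w = x i] =
     ((x 0%N == v)%:R * \prod_(i < n) P (x i) (x i.+1))%:E.

Lemma fcyl_measurable v (f : nat -> nat) (x : nat -> V) (p : nat -> bool) :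
  measurable [set w | forall j, p j -> W v (f j) w = x j].
Proof.
have -> : [set w | forall j, p j -> W v (f j) w = x j] =
    \bigcap_(j in [set j | p j]) [set w | W v (f j) w = x j].
  by apply/seteqP; split => w /= h j /h.
by apply: bigcap_measurableType => j _; exact: Wm.
Qed.

Definition cyl v n (x : nat -> V) := [set w | forall i, (i <= n)%N -> W v i w = x i].

Lemma cyl_measurable v n x : measurable (cyl v n x).
Proof. exact: (fcyl_measurable v id x (fun i => (i <= n)%N)). Qed.

Definition pth N := {ffun 'I_N.+1 -> V}.
Definition pext N (y : pth N) (i : nat) : V := y (inord i).
Definition seg v k N (w : Omega) : pth N := [ffun j : 'I_N.+1 => W v (k + j) w].
Definition segQ v k N (Q : set (pth N)) := [set w | Q (seg v k N w)].
Arguments segQ : clear implicits.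

Lemma seg_pext v k N w j : (j <= N)%N -> pext (seg v k N w) j = W v (k + j) w.
Proof. by move=> jN; rewrite /pext ffunE inordK. Qed.

Lemma seg_eq v k N w (y : pth N) :
  (forall j, (j <= N)%N -> W v (k + j) w = pext y j) -> seg v k N w = y.
Proof.
move=> h; apply/ffunP => j; rewrite ffunE h ?(leq_ord j)//.
by rewrite /pext inord_val.
Qed.

Lemma seg_bigcup v k N Q : segQ v k N Q =
  \bigcup_(y in Q) [set w | forall j, (j <= N)%N -> W v (k + j) w = pext y j].
Proof.
apply/seteqP; split => w /=.
  by move=> Qw; exists (seg v k N w) => // j jN; rewrite seg_pext.
by move=> [y Qy h]; rewrite /segQ /= (seg_eq h).
Qed.

Lemma segQ_measurable v k N Q : measurable (segQ v k N Q).
Proof.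
rewrite seg_bigcup; apply: bigcup_count_measurable => y _.
exact: (fcyl_measurable v (addn k) (pext y) (fun j => (j <= N)%N)).
Qed.

Lemma markov u (x : nat -> V) k N (Q : set (pth N)) :
  Pr (cyl u k x `&` segQ u k N Q) =
  ((x 0%N == u)%:R * \prod_(i < k) P (x i) (x i.+1))%:E * Pr (segQ (x k) 0 N Q).
Proof.
set c := ((x 0%N == u)%:R * _)%R.
have c0 : (0 <= c)%R by rewrite mulr_ge0 ?prodr_ge0 ?ler0n.
pose A (y : pth N) := [set w | (forall i, (i <= k)%N -> W u i w = x i) /\
                     forall j, (j <= N)%N -> W u (k + j) w = pext y j].
have mA y : measurable (A y).
  apply: measurableI; first exact: cyl_measurable.
  exact: (fcyl_measurable u (addn k) (pext y) (fun j => (j <= N)%N)).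
have -> : cyl u k x `&` segQ u k N Q = \bigcup_(y in Q) A y.
  apply/seteqP; split => w /=.
    move=> [hc Qw]; exists (seg u k N w) => //; split => // j jN.
    by rewrite seg_pext.
  by move=> [y Qy [hc hy]]; split => //; rewrite /segQ /= (seg_eq hy).
have tA : trivIset Q A.
  move=> y y' _ _ [w [[_ h] [_ h']]].
  by rewrite -(seg_eq h) -(seg_eq h').
pose B (y : pth N) :=
  [set w | forall j, (j <= N)%N -> W (x k) (0 + j) w = pext y j].
have mB y : measurable (B y).
  exact: (fcyl_measurable (x k) (addn 0) (pext y) (fun j => (j <= N)%N)).
have tB : trivIset Q B.
  move=> y y' _ _ [w [h h']]; by rewrite -(seg_eq h) -(seg_eq h').
rewrite seg_bigcup (measure_esum_count _ (fun y _ => mA y) tA).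
rewrite (measure_esum_count _ (fun y _ => mB y) tB).
rewrite -esumZl_count//.
apply: eq_esum => y Qy; rewrite /B.
have -> : [set w | forall j, (j <= N)%N -> W (x k) (0 + j) w = pext y j] =
   [set w | forall j, (j <= N)%N -> W (x k) j w = pext y j].
  by apply/seteqP; split => w /= h j /h; rewrite add0n.
have WL : forall v' x' n, Pr (cyl v' n x') = ((x' 0%N == v')%:R * \prod_(i < n) P (x' i) (x' i.+1))%:E.
  by move=> v' x' n; exact: Wlaw.
transitivity (c%:E * ((pext y 0%N == x k)%:R * \prod_(i < N) P (pext y i) (pext y i.+1))%:E); last first.
  by congr (_ * _); symmetry; exact: (Wlaw (x k) (pext y) N).
have [y0|y0] := eqVneq (pext y 0) (x k); last first.
  have -> : A y = set0.
    apply/seteqP; split => // w [h1 h2]; move/eqP: y0; apply.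
    by rewrite -h2 // addn0 h1.
  by rewrite measure0 mul0r mule0.
pose z i := if (i <= k)%N then x i else pext y (i - k).
have -> : A y = cyl u (k + N) z.
  apply/seteqP; split => w /=.
    move=> [h1 h2] i ikN; rewrite /z; case: ifPn => ik; first exact: h1.
    rewrite -h2; first by rewrite subnKC // ltnW // ltnNge.
    by rewrite leq_subLR.
  move=> h; split => [i ik|j jN].
    by rewrite h ?/z ?ik // (leq_trans ik) // leq_addr.
  rewrite h ?leq_add2l // /z; case: ifPn => [|_]; last by rewrite addKn.
  by rewrite -{2}(addn0 k) leq_add2l leqn0 => /eqP ->; rewrite addn0 y0.
etransitivity; [exact: (WL u z (k + N)%N)|].
rewrite (_ : (true%:R : R) = 1%R)// mul1r /z leq0n big_split_ord /= -EFinM mulrA; congr (_ * _)%:E.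
  rewrite /c; congr (_ * _)%R; apply: eq_bigr => i _.
  by rewrite ltnW ?ltn_ord // ltn_ord.
apply: eq_bigr => i _.
rewrite !(leqNgt _ k) ltnS.
case: (ltnP k (k + i)) => ki; last first.
  have -> : val i = 0%N by move: ki; rewrite -{2}(addn0 k) leq_add2l leqn0 => /eqP.
  by rewrite /= addn0 leqnn /= y0 subSnn.
by rewrite /= leq_addr /= addKn subSn ?leq_addr // addKn.
Qed.

Lemma W0 u : Pr [set w | W u 0 w = u] = 1.
Proof.
have -> : [set w | W u 0 w = u] = cyl u 0 (fun=> u).
  apply/seteqP; split => w /=; last by move=> /(_ 0%N (leqnn 0)).
  by move=> h i; rewrite leqn0 => /eqP ->.
etransitivity; first exact: (Wlaw u (fun=> u) 0).
by rewrite eqxx big_ord0 mulr1.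
Qed.

Lemma W0I u A : measurable A -> Pr A = Pr (A `&` [set w | W u 0 w = u]).
Proof.
move=> mA; rewrite (measureDI Pr mA (Wm u 0 u)).
have N0 : Pr (~` [set w | W u 0 w = u]) = 0 by rewrite probability_setC // W0 subee.
have mD : measurable (A `\` [set w | W u 0 w = u]) by exact: measurableD.
have mC : measurable (~` [set w | W u 0 w = u]) by exact: measurableC.
have sD : A `\` [set w | W u 0 w = u] `<=` ~` [set w | W u 0 w = u] by move=> w [].
by rewrite (subset_measure0 mD mC sD N0) add0e.
Qed.

Definition FH w u n :=
  [set om | W w n om = u /\ forall i, (0 < i < n)%N -> W w i om <> u].

Lemma FH_measurable w u n : measurable (FH w u n).
Proof.
have -> : FH w u n = [set om | W w n om = u] `&`
    \bigcap_(i in [set i | (0 < i < n)%N]) ~` [set om | W w i om = u].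
  by apply/seteqP; split => om /= [h1 h2]; split => // i /h2.
apply: measurableI => //; apply: bigcap_measurableType => i _.
exact: measurableC.
Qed.

Lemma fp_FH u : forall n w, first_passage P n.+1 w u = Pr (FH w u n.+1).
Proof.
elim=> [|m IH] w.
  rewrite /= (W0I w (FH_measurable w u 1)).
  have -> : FH w u 1 `&` [set om | W w 0 om = w] =
      cyl w 1 (fun i => if i == 0%N then w else u).
    apply/seteqP; split => om /=.
      by move=> [[h1 _] h0] i; case: i => [|[|i]] //=.
    move=> h; split; last exact: (h 0%N).
    by split; [exact: (h 1%N)|case => [|[|]]].
  symmetry; etransitivity; first exact: Wlaw.
  by rewrite eqxx big_ord1 /= mul1r.
have -> : first_passage P m.+2 w u = \esum_(w' in [set w' | w' != u])
    ((P w w')%:E * first_passage P m.+1 w' u) by [].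
under eq_esum => w' _ do rewrite IH.
rewrite (W0I w (FH_measurable w u m.+2)).
pose x (w' : V) := fun i => if i == 0%N then w else w'.
pose Qf : set (pth m.+1) := [set y | pext y m.+1 = u /\
   forall j, (0 < j < m.+1)%N -> pext y j <> u].
have -> : FH w u m.+2 `&` [set om | W w 0 om = w] =
    \bigcup_(w' in [set w' | w' != u]) (cyl w 1 (x w') `&` segQ w 1 m.+1 Qf).
  apply/seteqP; split => om; rewrite /bigcup /FH /setI; cbv beta delta [mkset Datatypes.id].
    move=> [[hn hi] h0]; exists (W w 1 om).
      by apply/eqP; apply: hi.
    split; first by case => [|[|i]] //=.
    rewrite /segQ /Qf; cbv beta delta [mkset Datatypes.id]; rewrite seg_pext // add1n; split => // j /andP[j0 jm].
    by rewrite seg_pext ?add1n; [apply: hi; apply/andP; split; [done|by rewrite ltnS]|exact: ltnW].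
  move=> [w' w'u [hc hQ]]; split; last exact: (hc 0%N).
  move: hQ; rewrite /segQ /Qf; cbv beta delta [mkset Datatypes.id]; rewrite seg_pext // add1n => -[hn hj]; split => //.
  case => [|[|i]] //.
    by move=> _; rewrite (hc 1%N) //= => e; move: w'u; rewrite /x /= in e; rewrite e eqxx.
  rewrite ltnS => /andP[_ im]; rewrite -add1n -(@seg_pext w 1 m.+1 om i.+1); last exact: ltnW.
  exact: hj.
rewrite measure_esum_count; first last.
- move=> w1 w2 _ _ [om [[h1 _] [h2 _]]].
  by rewrite -[w1]/(x w1 1%N) -(h1 1%N) // (h2 1%N).
- by move=> w' _; apply: measurableI; [exact: cyl_measurable|exact: segQ_measurable].
apply: eq_esum => w' w'u; symmetry.
transitivity (((x w' 0%N == w)%:R * \prod_(i < 1) P (x w' i) (x w' i.+1))%:E *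
   Pr (segQ (x w' 1%N) 0 m.+1 Qf)); first exact: markov.
rewrite /x /= eqxx big_ord1 /= mul1r; congr (_ * Pr _).
apply/seteqP; split => om; rewrite /segQ /Qf /FH; cbv beta delta [mkset Datatypes.id].
  move=> [hn hj]; rewrite (@seg_pext w' 0 m.+1 om m.+1) // add0n in hn; split => // i im.
  rewrite -(add0n i) -(@seg_pext w' 0 m.+1 om i); first by apply: hj.
  by case/andP: im => _ /ltnW.
move=> [hn hi]; rewrite (@seg_pext w' 0 m.+1 om m.+1) // add0n; split => // j jm.
rewrite (@seg_pext w' 0 m.+1 om j) ?add0n; first exact: hi.
by case/andP: jm => _ /ltnW.
Qed.

Lemma never_return u : recurrent P ->
  Pr [set om | forall n, (0 < n)%N -> W u n om <> u] = 0.
Proof.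
move=> rec.
have tF : trivIset [set n | (0 < n)%N] (FH u u).
  move=> n m n0 m0 [om [[hn hin] [hm him]]].
  case: (ltngtP n m) => // nm.
    by exfalso; apply: (him n) => //; rewrite n0 nm.
  by exfalso; apply: (hin m) => //; rewrite m0 nm.
have E : Pr (\bigcup_(n in [set n | (0 < n)%N]) FH u u n) = 1.
  rewrite (measure_esum_count _ (fun n _ => FH_measurable u u n) tF).
  transitivity (\esum_(n in [set n : nat | (0 < n)%N]) first_passage P n u u);
    last exact: rec u.
  apply: eq_esum => n; case: n => // n _; symmetry; exact: fp_FH.
have mU : measurable (\bigcup_(n in [set n | (0 < n)%N]) FH u u n).
  by apply: bigcup_measurable => n _; exact: FH_measurable.
have N0 : Pr (~` \bigcup_(n in [set n | (0 < n)%N]) FH u u n) = 0.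
  by rewrite probability_setC // E subee.
have mN : measurable [set om | forall n, (0 < n)%N -> W u n om <> u].
  have -> : [set om | forall n, (0 < n)%N -> W u n om <> u] =
      \bigcap_(n in [set n | (0 < n)%N]) ~` [set om | W u n om = u].
    by apply/seteqP; split => om /= h n /h.
  by apply: bigcap_measurableType => n _; exact: measurableC.
apply: (subset_measure0 mN (measurableC mU) _ N0).
by move=> om h [n n0 [hn _]]; exact: (h n n0 hn).
Qed.

Lemma path_last u : forall n (x : nat -> V), x 0%N = u ->
  (forall i, (i < n)%N -> (0 < P (x i) (x i.+1))%R) -> x n <> u ->
  exists k (y : nat -> V), [/\ y 0%N = u, y k = x n,
    (forall i, (i < k)%N -> (0 < P (y i) (y i.+1))%R) &
    (forall i, (0 < i <= k)%N -> y i <> u)].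
Proof.
elim=> [|n IH] x x0 pos xn; first by rewrite x0 in xn.
case: (eqVneq (x n) u) => [xnu|xnu].
  exists 1%N, (fun i => if i == 0%N then u else x n.+1); split => //.
    by case => // _; rewrite /= -xnu; apply: pos.
  by case => [|[|]].
have [k [y [y0 yk ypos yav]]] := IH x x0 (fun i (h : (i < n)%N) => pos i (ltnW h)) (fun e => negP xnu (introT eqP e)).
exists k.+1, (fun i => if (i <= k)%N then y i else x n.+1); split.
- by rewrite leq0n.
- by rewrite ltnn.
- move=> i; rewrite ltnS => ik; case: (eqVneq i k) => [->|ne].
    by rewrite leqnn ltnn yk; apply: pos.
  have ik' : (i < k)%N by rewrite ltn_neqAle ne ik.
  by rewrite ik ik'; apply: ypos.
- move=> i /andP[i0 ik]; case: (eqVneq i k.+1) => [->|ne]; first by rewrite ltnn.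
  have ik' : (i <= k)%N by rewrite -ltnS ltn_neqAle ne ik.
  by rewrite ik'; apply: yav; rewrite i0.
Qed.

Lemma hit_all u v : recurrent P -> irreducible P ->
  Pr [set om | forall n, W v n om <> u] = 0.
Proof.
move=> rec irr.
have mNv' v' : measurable [set om | forall n, W v' n om <> u].
  have -> : [set om | forall n, W v' n om <> u] =
      \bigcap_(n in [set: nat]) ~` [set om | W v' n om = u].
    by apply/seteqP; split => om /= h n; [move=> _; exact: h|exact: h].
  by apply: bigcap_measurableType => n _; exact: measurableC.
have mNv := mNv' v.
case: (eqVneq v u) => [evu|vu].
  rewrite evu in mNv *.
  have N0 : Pr (~` [set om | W u 0 om = u]) = 0 by rewrite probability_setC // W0 subee.
  apply: (subset_measure0 mNv (measurableC (Wm u 0 u)) _ N0).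
  by move=> om h; exact: h.
have [n [x [x0 [xn xpos]]]] := irr u v.
have [k [y [y0 yk ypos yav]]] := path_last x0 xpos (fun e => negP vu (introT eqP (etrans (esym xn) e))).
rewrite xn in yk.
set c := (\prod_(i < k) P (y i) (y i.+1))%R.
have c0 : (0 < c)%R by apply: prodr_gt0 => i _; apply: ypos.
set h := Pr [set om | forall n, W v n om <> u].
pose NM M := [set om | forall i, (0 < i <= M)%N -> W u i om <> u].
have mNM M : measurable (NM M).
  have -> : NM M = \bigcap_(i in [set i | (0 < i <= M)%N]) ~` [set om | W u i om = u].
    by apply/seteqP; split => om /= hh i /hh.
  by apply: bigcap_measurableType => i _; exact: measurableC.
have key N : c%:E * h <= Pr (NM (k + N)%N).
  pose Av : set (pth N) := [set z | forall j, (j <= N)%N -> pext z j <> u].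
  have h1 : h <= Pr (segQ v 0 N Av).
    apply: le_measure; [exact/mem_set/mNv|exact/mem_set/segQ_measurable|].
    move=> om hom; rewrite /segQ /Av; cbv beta delta [mkset Datatypes.id] => j jN.
    by rewrite seg_pext // add0n; exact: hom.
  have h2 : Pr (cyl u k y `&` segQ u k N Av) = c%:E * Pr (segQ v 0 N Av).
    transitivity (((y 0%N == u)%:R * \prod_(i < k) P (y i) (y i.+1))%:E *
       Pr (segQ (y k) 0 N Av)); first exact: markov.
    by rewrite y0 eqxx yk (_ : (true%:R : R) = 1%R)// mul1r.
  have h3 : Pr (cyl u k y `&` segQ u k N Av) <= Pr (NM (k + N)%N).
    apply: le_measure; last first.
    - move=> om [hc hs] i /andP[i0 ikN].
      case: (leqP i k) => ik.
        by rewrite (hc i ik); apply: yav; rewrite i0 ik.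
      move: hs; rewrite /segQ /Av; cbv beta delta [mkset Datatypes.id] => /(_ (i - k)%N).
      rewrite seg_pext ?subnKC ?(ltnW ik) //; first by apply; rewrite leq_subLR.
      by rewrite leq_subLR.
    - exact/mem_set/mNM.
    - by apply/mem_set; apply: measurableI; [exact: cyl_measurable|exact: segQ_measurable].
  apply: (le_trans _ h3); rewrite h2; apply: lee_wpmul2l => //.
  by rewrite lee_fin ltW.
have ninc : nonincreasing_seq NM.
  move=> a b ab; rewrite subsetEset => om hh i /andP[i0 ib]; apply: hh.
  by rewrite i0 (leq_trans ib ab).
have capE : \bigcap_M NM M = [set om | forall n, (0 < n)%N -> W u n om <> u].
  apply/seteqP; split => om /=.
    by move=> hh m m0; apply: (hh m) => //; rewrite m0 leqnn.
  by move=> hh M _ i /andP[i0 _]; apply: hh.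
have mcap : measurable (\bigcap_M NM M) by apply: bigcapT_measurable.
have cv := @nonincreasing_cvg_mu _ _ _ Pr NM
  (le_lt_trans (probability_le1 Pr (mNM 0%N)) (ltey 1)) mNM mcap ninc.
have hle : c%:E * h <= lim (Pr \o NM @ \oo).
  apply: lime_ge; first by apply/cvg_ex; eexists; exact: cv.
  near=> M.
  have kM : (k <= M)%N by near: M; exact: nbhs_infty_ge.
  by rewrite /= -(subnKC kM); exact: key.
rewrite (cvg_lim _ cv) in hle.
have nr := never_return u rec.
have hle' : c%:E * h <= 0.
  apply: (le_trans hle); rewrite capE le_eqVlt; apply/orP; left; apply/eqP; exact: nr.
rewrite muleC pmule_lle0 ?lte_fin // in hle'.
by apply/eqP; rewrite eq_le hle' measure_ge0.
Unshelve. all: by end_near.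
Qed.

Lemma ae_hit u v : recurrent P -> irreducible P ->
  {ae Pr, forall om, exists n, W v n om = u}.
Proof.
move=> rec irr; exists [set om | forall n, W v n om <> u]; split.
- have -> : [set om | forall n, W v n om <> u] =
      \bigcap_(n in [set: nat]) ~` [set om | W v n om = u].
    by apply/seteqP; split => om /= h n; [move=> _; exact: h|exact: h].
  by apply: bigcap_measurableType => n _; exact: measurableC.
- exact: hit_all.
- by move=> om /= h n e; apply: h; exists n.
Qed.

Lemma ae_hit_all : recurrent P -> irreducible P ->
  {ae Pr, forall om, forall v u, exists n, W v n om = u}.
Proof.
move=> rec irr.
have := @ae_foralln _ _ _ Pr (fun n om =>
  match (choice.unpickle n : option (V * V)) with
  | Some p => exists k, W p.1 k om = p.2 | None => True end).
case=> [n|].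
  by case: (choice.unpickle n : option (V * V)) => [[v u]|]; [exact: ae_hit|exact: aeW].
move=> N [mN N0 sN]; exists N; split => // om /= h; apply: sN => /= h'.
apply: h => v u; have := h' (choice.pickle (v, u)).
by rewrite choice.pickleK.
Qed.

End Markov.

End PartB.
Import PartB.

Module PartC.

Section Det.
Variables (R : realType) (V : countType) (d : measure_display)
  (Omega : measurableType d) (C : V -> Omega -> R) (W : V -> nat -> Omega -> V)
  (w : Omega).
Hypothesis dist : forall u v, u != v -> C u w != C v w.

Lemma minball_uniq c v1 v2 : minball C w c v1 -> minball C w c v2 -> v1 = v2.
Proof.
move=> [b1 m1] [b2 m2]; apply/eqP; apply: contraT => ne.
have := dist ne.
suff -> : C v1 w = C v2 w by rewrite eqxx.
by apply: le_anti; rewrite m1 ?m2.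
Qed.

Lemma step_none c : (forall v, ~ minball C w c v) -> step C W w c = c.
Proof.
move=> h; rewrite /step; case: pselect => [H|//].
by exfalso; case: H => v hv; exact: h v hv.
Qed.

Lemma step_frozen c v : minball C w c v -> (forall n, c (W v n w) <> SHole) ->
  step C W w c = fun=> SStar.
Proof.
move=> mv nh; rewrite /step; case: pselect => [H|H]; last first.
  by exfalso; apply: H; exists v.
case: (cid H) => v' mv' /=; have ev := minball_uniq mv' mv; subst v'.
case: pselect => [Hn|//]; exfalso; case: Hn => n hn; exact: nh n hn.
Qed.

Lemma step_move c v n : minball C w c v -> c (W v n w) = SHole ->
  (forall j, (j < n)%N -> c (W v j w) <> SHole) ->
  step C W w c = fun u => if (u == v) || (u == W v n w) then SZero else c u.
Proof.
move=> mv hn hj; rewrite /step; case: pselect => [H|H]; last first.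
  by exfalso; apply: H; exists v.
case: (cid H) => v' mv' /=; have ev := minball_uniq mv' mv; subst v'.
case: pselect => [Hn|Hn]; last by exfalso; apply: Hn; exists n.
case: ex_minnP => m /asboolP hm hmin.
have -> : m = n.
  apply/eqP; rewrite eqn_leq hmin ?andbT; last exact/asboolP.
  by rewrite leqNgt; apply/negP => /hj.
by [].
Qed.


Definition inv (c : V -> site) (n : nat) := exists bl hl : seq V,
  [/\ uniq bl, uniq hl, size bl = n & (size bl <= size hl)%N] /\
  [/\ (forall u, c u = SBall <-> u \in bl), (forall h, h \in hl -> c h = SHole)
    & (forall u, c u <> SStar)].

Lemma min_exists (s : seq V) : s != [::] ->
  exists2 v, v \in s & forall u, u \in s -> C v w <= C u w.
Proof.
elim: s => // a s IH _; case: (eqVneq s [::]) => [->|s0].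
  by exists a; rewrite ?mem_seq1 // => u; rewrite mem_seq1 => /eqP ->.
have [v vs vmin] := IH s0.
case: (leP (C a w) (C v w)) => av.
  exists a; first exact: mem_head.
  move=> u; rewrite in_cons => /orP[/eqP ->//|us].
  exact: le_trans av (vmin u us).
exists v; first by rewrite in_cons vs orbT.
move=> u; rewrite in_cons => /orP[/eqP ->|us]; [exact: ltW|exact: vmin].
Qed.

Hypothesis hit : forall v u, exists n, W v n w = u.

Lemma inv_step c n : inv c n.+1 -> inv (step C W w c) n.
Proof.
move=> [bl [hl [[ubl uhl sbl shl] [hb hh hs]]]].
have bl0 : bl != [::] by rewrite -size_eq0 sbl.
have [v vbl vmin] := min_exists bl0.
have mv : minball C w c v.
  by split; [exact/hb|move=> u /hb ub; exact: vmin].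
have [h0 h0hl] : exists h, h \in hl.
  by case: hl uhl shl hh => [|h hl] //; [rewrite sbl|exists h; rewrite mem_head].
have ex : exists n0, `[< c (W v n0 w) = SHole >].
  by have [n0 e] := hit v h0; exists n0; apply/asboolP; rewrite e hh.
case: (ex_minnP ex) => m /asboolP hm hmin.
rewrite (step_move mv hm); last first.
  by move=> j jm /asboolP/hmin; rewrite leqNgt jm.
have [h eh] : exists h, h = W v m w by eexists.
rewrite -eh in hm *.
have vB : c v = SBall by apply/hb.
have hv : h != v by apply/eqP => e; move: hm; rewrite e vB.
have hnb : h \notin bl by apply/negP => /hb; rewrite hm.
exists (rem v bl), (rem h hl); split; split.
- exact: rem_uniq.
- exact: rem_uniq.
- by rewrite size_rem // sbl.
- rewrite size_rem //; case: (boolP (h \in hl)) => hin.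
    by rewrite size_rem // -!subn1 leq_sub2r.
  by rewrite rem_id // (leq_trans _ shl) // leq_pred.
- move=> u; rewrite (mem_rem_uniq _ ubl) inE.
  case: (eqVneq u v) => [->|uv] /=; first by split.
  case: (eqVneq u h) => [->|uh] /=; first by split => // /hb; rewrite hm.
  exact: hb.
- move=> h'; rewrite (mem_rem_uniq _ uhl) inE => /andP[h'h h'hl].
  have h'v : h' != v by apply/eqP => e; move: (hh _ h'hl); rewrite e vB.
  by rewrite (negPf h'v) (negPf h'h) /=; exact: hh.
- by move=> u; case: ifP.
Qed.

Lemma inv_iter c N : inv c N -> forall k, (k <= N)%N ->
  inv (iter k (step C W w) c) (N - k).
Proof.
move=> hc; elim=> [|k IH] kN; first by rewrite subn0.
by rewrite iterS; apply: inv_step; rewrite subnSK //; apply: IH; exact: ltnW.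
Qed.

End Det.

Section Golf2.
Variables (R : realType) (V : countType) (d : measure_display)
  (Omega : measurableType d) (init : V -> Omega -> site) (C : V -> Omega -> R)
  (W : V -> nat -> Omega -> V) (w : Omega).
Local Open Scope card_scope.

Lemma golf_wd t : well_defined init C w ->
  golf init C W w t = iter (nactivated init C w t) (step C W w) (init^~ w).
Proof. by move=> wd; rewrite /golf asboolT. Qed.

Lemma golf_nwd t : ~ well_defined init C w -> golf init C W w t = fun=> SStar.
Proof. by move=> wd; rewrite /golf asboolF. Qed.

Lemma nact_eq s1 s2 :
  (forall v, init v w = SBall -> (C v w <= s1 <-> C v w <= s2)) ->
  nactivated init C w s1 = nactivated init C w s2.
Proof.
move=> h; rewrite /nactivated; congr (size (fset_set _)).
apply/seteqP; split => v /= [hv hc]; split => //; by apply/(h v hv).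
Qed.

Lemma inv_init : (forall v, init v w <> SStar) -> finite_set (B0 init w) ->
  B0 init w #<= H0 init w -> inv (init^~ w) (size (fset_set (B0 init w))).
Proof.
move=> nS finB le.
have [Hs sHs cHs] : exists2 Hs : {fset V}, [set` Hs] `<=` H0 init w &
    (size (fset_set (B0 init w)) <= size Hs)%N.
  case: (pselect (finite_set (H0 init w))) => finH; last first.
    exact: infinite_set_fset.
  exists (fset_set (H0 init w)).
    by move=> h /=; rewrite in_fset_set // => /set_mem.
  have [m Bm] := (finite_setP _).1 finB.
  rewrite (card_fset_set Bm); apply: leq_card_fset_set => //.
  by rewrite -(card_le_eql Bm).
exists (fset_set (B0 init w)), Hs; split; split => //.
all: first [exact: fset_uniq | by move=> u; rewrite in_fset_set //; split => [/mem_set|/set_mem]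
  | by move=> h hin; apply: sHs].
Qed.

Lemma not_frozen : (forall v, init v w <> SStar) -> (forall v, 0 < C v w < 1) ->
  well_defined init C w -> B0 init w #<= H0 init w ->
  (forall v u, exists n, W v n w = u) -> forall v, golf init C W w 1 v <> SStar.
Proof.
move=> nS C01 wd le hit v; rewrite golf_wd //.
have -> : nactivated init C w 1 = size (fset_set (B0 init w)).
  rewrite /nactivated; congr (size (fset_set _)).
  apply/seteqP; split => u /=; first by case.
  by move=> hu; split => //; have /andP[_ /ltW] := C01 u.
have := inv_iter wd.2 hit (inv_init nS wd.1 le) (leqnn _).
by rewrite subnn => -[bl [hl [_ [_ _ hs]]]]; exact: hs.
Qed.

Lemma gap_right (s : seq V) t : exists2 e, 0 < e &
  forall v, v \in s -> C v w <= t \/ t + e <= C v w.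
Proof.
elim: s => [|a s [e e0 IH]]; first by exists 1.
case: (leP (C a w) t) => hat.
  exists e => // v; rewrite in_cons => /orP[/eqP ->|/IH//]; by left.
exists (Num.min e (C a w - t)); first by rewrite lt_min e0 subr_gt0.
move=> v; rewrite in_cons => /orP[/eqP ->|/IH[h|h]].
- by right; rewrite -lerBrDl ge_min lexx orbT.
- by left.
- by right; apply: le_trans h; rewrite lerD2l ge_min lexx.
Qed.

Lemma gap_left (s : seq V) t : exists2 e, 0 < e &
  forall v, v \in s -> t <= C v w \/ C v w <= t - e.
Proof.
elim: s => [|a s [e e0 IH]]; first by exists 1.
case: (leP t (C a w)) => hat.
  exists e => // v; rewrite in_cons => /orP[/eqP ->|/IH//]; by left.
exists (Num.min e (t - C a w)); first by rewrite lt_min e0 subr_gt0.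
move=> v; rewrite in_cons => /orP[/eqP ->|/IH[h|h]].
- by right; rewrite lerBrDl -lerBrDr ge_min lexx orbT.
- by left.
- by right; apply: (le_trans h); rewrite lerD2l lerN2 ge_min lexx.
Qed.

Lemma golf_cadlag v : cadlag01_discrete (fun t => golf init C W w t v).
Proof.
case: (pselect (well_defined init C w)) => wd; last first.
  split=> t _; exists 1 => //; first by move=> s _; rewrite !golf_nwd.
  by exists SStar => s _; rewrite golf_nwd.
have inB u : init u w = SBall -> u \in (fset_set (B0 init w) : seq V).
  by move=> hu; rewrite in_fset_set; [exact: mem_set|exact: wd.1].
split=> t _.
  have [e e0 he] := gap_right (fset_set (B0 init w)) t.
  exists e => // s /andP[ts se]; rewrite !golf_wd //; congr (iter _ _ _ v).
  apply: nact_eq => u /inB /he [h|h]; split => hs.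
  - exact: h.
  - exact: le_trans h ts.
  - by exfalso; move: (lt_le_trans se h); rewrite ltNge hs.
  - by exfalso; move: (le_trans h hs); rewrite gerDl leNgt e0.
have [e e0 he] := gap_left (fset_set (B0 init w)) t.
exists e => //; exists (golf init C W w (t - e) v) => s /andP[tes st].
rewrite !golf_wd //; congr (iter _ _ _ v).
apply: nact_eq => u /inB /he [h|h]; split => hs.
- by exfalso; move: (lt_le_trans st h); rewrite ltNge hs.
- by exfalso; move: (le_trans h hs); rewrite lerBrDr gerDl leNgt e0.
- exact: h.
- exact: le_trans hs (ltW tes).
Qed.

End Golf2.

End PartC.
Import PartC.

Module PartD.

Lemma set_ext (T : Type) (A B : set T) : (forall x, A x <-> B x) -> A = B.
Proof. by move=> h; apply/seteqP; split => x /h. Qed.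

Section Meas.
Variables (R : realType) (V : countType) (d : measure_display)
  (Omega : measurableType d) (init : V -> Omega -> site) (C : V -> Omega -> R)
  (W : V -> nat -> Omega -> V).
Hypothesis initm : forall v s, measurable [set w | init v w = s].
Hypothesis Cm : forall v, measurable_fun setT (C v).
Hypothesis Wm : forall v n u, measurable [set w | W v n w = u].

Lemma mprop (p : Prop) : measurable [set _ : Omega | p].
Proof.
case: (pselect p) => hp.
  by have -> : [set _ : Omega | p] = setT by apply: set_ext.
by have -> : [set _ : Omega | p] = set0 by apply: set_ext.
Qed.

Lemma mCle u v : measurable [set w | C u w <= C v w].
Proof. rewrite -[X in measurable X]setTI; exact: measurable_fun_le. Qed.

Lemma mClet v (t : R) : measurable [set w | C v w <= t].
Proof.
rewrite -[X in measurable X]setTI.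
exact: (measurable_fun_le measurableT (Cm v) (measurable_cst t)).
Qed.

Lemma mCneq u v : measurable [set w | C u w != C v w].
Proof.
have -> : [set w | C u w != C v w] =
    ~` ([set w | C u w <= C v w] `&` [set w | C v w <= C u w]).
  apply: set_ext => w /=; split.
    by move=> ne [a b]; move: ne; rewrite eq_le a b.
  by move=> h; apply/negP => /eqP e; apply: h; rewrite e; split.
by apply/measurableC/measurableI; [exact: mCle|exact: mCle].
Qed.

Lemma mB0eq (F : {fset V}) : measurable [set w | B0 init w = [set` F]].
Proof.
have -> : [set w | B0 init w = [set` F]] = \bigcap_(v in [set: V])
    (if v \in F then [set w | init v w = SBall] else ~` [set w | init v w = SBall]).
  apply: set_ext => w; split.
    move=> e v _; case: ifP => vF.
      by have : [set` F] v by []; rewrite -e.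
    by move=> hv; have : B0 init w v by []; rewrite e /= vF.
  move=> h; apply: set_ext => v /=; have := h v I; case: ifP => vF.
    by split.
  by split => // hv; exfalso; apply: (h v I).
apply: bigcap_count_measurable => v _; case: ifP => _ //.
exact: measurableC.
Qed.

Lemma mB0fin : measurable [set w | finite_set (B0 init w)].
Proof.
have -> : [set w | finite_set (B0 init w)] =
    \bigcup_(F in [set: {fset V}]) [set w | B0 init w = [set` F]].
  apply: set_ext => w; split.
    by move=> fin; exists (fset_set (B0 init w)) => //=; rewrite fset_setK.
  by move=> [F _ /= ->]; exact: finite_fset.
by apply: bigcup_count_measurable => F _; exact: mB0eq.
Qed.

Lemma mdist : measurable [set w | forall u v, u != v -> C u w != C v w].
Proof.
have -> : [set w | forall u v, u != v -> C u w != C v w] =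
    \bigcap_(p in [set: V * V])
      (if p.1 != p.2 then [set w | C p.1 w != C p.2 w] else setT).
  apply: set_ext => w; split.
    by move=> h [u v] _ /=; case: ifP => // /h.
  move=> h u v uv; have := h (u, v) I; by rewrite /= uv.
apply: bigcap_count_measurable => p _; case: ifP => _ //; exact: mCneq.
Qed.

Definition D := [set w | well_defined init C w].

Lemma mD : measurable D.
Proof.
have -> : D = [set w | finite_set (B0 init w)] `&`
    [set w | forall u v, u != v -> C u w != C v w].
  by apply: set_ext => w; split => -[].
exact: measurableI mB0fin mdist.
Qed.

Definition mDs (X : set Omega) := measurable (D `&` X).

Lemma mDs_meas X : measurable X -> mDs X.
Proof. by move=> mX; apply: measurableI mD mX. Qed.

Lemma mDsI X Y : mDs X -> mDs Y -> mDs (X `&` Y).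
Proof.
move=> mX mY; rewrite /mDs (_ : D `&` (X `&` Y) = (D `&` X) `&` (D `&` Y)).
  exact: measurableI.
by rewrite setIACA setIid.
Qed.

Lemma mDsC X : mDs X -> mDs (~` X).
Proof.
move=> mX; rewrite /mDs (_ : D `&` ~` X = D `\` (D `&` X)).
  exact: measurableD mD mX.
by rewrite setDE setCI setIUr setICr set0U.
Qed.

Lemma mDsU X Y : mDs X -> mDs Y -> mDs (X `|` Y).
Proof.
move=> mX mY; rewrite -[X `|` Y]setCK setCU; apply: mDsC; apply: mDsI; exact: mDsC.
Qed.

Lemma mDs_bigcup (I : countType) (S : set I) (F : I -> set Omega) :
  (forall i, S i -> mDs (F i)) -> mDs (\bigcup_(i in S) F i).
Proof.
move=> mF; rewrite /mDs setI_bigcupr; exact: bigcup_count_measurable.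
Qed.

Lemma mDs_bigcap (I : countType) (S : set I) (F : I -> set Omega) :
  (forall i, S i -> mDs (F i)) -> mDs (\bigcap_(i in S) F i).
Proof.
move=> mF; rewrite -[X in mDs X]setCK setC_bigcap; apply: mDsC.
by apply: mDs_bigcup => i Si; apply: mDsC; exact: mF.
Qed.


Definition cfg k w := iter k (step C W w) (init^~ w).
Definition cfgM k := forall u s, mDs [set w | cfg k w u = s].

Lemma mDs_comp k (f : Omega -> V) : cfgM k ->
  (forall x, measurable [set w | f w = x]) ->
  forall s, mDs [set w | cfg k w (f w) = s].
Proof.
move=> hk mf s.
have -> : [set w | cfg k w (f w) = s] = \bigcup_(x in [set: V])
    ([set w | f w = x] `&` [set w | cfg k w x = s]).
  apply: set_ext => w; split; first by move=> h; exists (f w).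
  by move=> [x _ [<-]].
apply: mDs_bigcup => x _; apply: mDsI; [exact: mDs_meas|exact: hk].
Qed.

Lemma mDs_minball k v : cfgM k -> mDs [set w | minball C w (cfg k w) v].
Proof.
move=> hk.
have -> : [set w | minball C w (cfg k w) v] = [set w | cfg k w v = SBall] `&`
   \bigcap_(u in [set: V])
     (~` [set w | cfg k w u = SBall] `|` [set w | C v w <= C u w]).
  apply: set_ext => w; split.
    move=> [hv hm]; split => // u _.
    by case: (pselect (cfg k w u = SBall)) => hu; [right; exact: hm|left].
  by move=> [hv hm]; split => // u hu; case: (hm u I).
apply: mDsI; first exact: hk.
apply: mDs_bigcap => u _; apply: mDsU; [apply: mDsC; exact: hk|].
exact/mDs_meas/mCle.
Qed.

Definition Xi k u s := (\bigcap_(v in [set: V]) ~` [set w | minball C w (cfg k w) v])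
  `&` [set w | cfg k w u = s].
Definition Xii k s := \bigcup_(v in [set: V])
  ([set w | minball C w (cfg k w) v] `&`
   \bigcap_(n in [set: nat]) ~` [set w | cfg k w (W v n w) = SHole] `&`
   [set _ | SStar = s]).
Definition Xiii k u s := \bigcup_(v in [set: V]) \bigcup_(n in [set: nat])
  ([set w | minball C w (cfg k w) v] `&` [set w | cfg k w (W v n w) = SHole] `&`
   \bigcap_(j in [set j | (j < n)%N]) ~` [set w | cfg k w (W v j w) = SHole] `&`
   [set w | (if (u == v) || (u == W v n w) then SZero else cfg k w u) = s]).

Lemma cfgS_eq k u s : D `&` [set w | cfg k.+1 w u = s] =
  D `&` (Xi k u s `|` Xii k s `|` Xiii k u s).
Proof.
apply: set_ext => w; split => -[Dw h]; split => //; have dist := Dw.2.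
  have e : cfg k.+1 w = step C W w (cfg k w) by rewrite /cfg iterS.
  have {}h : step C W w (cfg k w) u = s by rewrite -e; exact: h.
  case: (pselect (exists v, minball C w (cfg k w) v)) => [[v mv]|nmv]; last first.
    rewrite step_none in h; last by move=> v mv; apply: nmv; exists v.
    by left; left; split => // v _ mv; apply: nmv; exists v.
  case: (pselect (exists n, cfg k w (W v n w) = SHole)) => [hn|nhn]; last first.
    rewrite (step_frozen dist mv) in h; last by move=> n hn; apply: nhn; exists n.
    left; right; exists v => //; split => //; split => // n _ hn.
    by apply: nhn; exists n.
  have ex : exists n, `[< cfg k w (W v n w) = SHole >].
    by case: hn => n hn; exists n; exact/asboolP.
  case: (ex_minnP ex) => m /asboolP hm hmin.
  have hj : forall j, (j < m)%N -> cfg k w (W v j w) <> SHole.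
    by move=> j jm /asboolP/hmin; rewrite leqNgt jm.
  rewrite (step_move dist mv hm hj) in h.
  right; exists v => //; exists m => //; split => //; split => //; split => //.
have e : cfg k.+1 w = step C W w (cfg k w) by rewrite /cfg iterS.
change (cfg k.+1 w u = s); rewrite e.
case: h => [[[hnm hu]|[v _ [[mv hn] <-]]]|[v _ [n _ [[[mv hn] hj] <-]]]].
- rewrite step_none // => v mv; exact: hnm v I mv.
- rewrite (step_frozen dist mv) // => n; exact: hn n I.
- by rewrite (step_move dist mv hn) // => j jn; apply: hj.
Qed.

Lemma cfgM_all k : cfgM k.
Proof.
elim: k => [|k IH] u s.
  by apply: mDs_meas; exact: initm.
rewrite /mDs cfgS_eq -/(mDs _); apply: mDsU; first apply: mDsU.
- apply: mDsI; last exact: IH.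
  by apply: mDs_bigcap => v _; apply: mDsC; exact: mDs_minball.
- apply: mDs_bigcup => v _; apply: mDsI; last exact/mDs_meas/mprop.
  apply: mDsI; first exact: mDs_minball.
  apply: mDs_bigcap => n _; apply: mDsC; exact: mDs_comp.
- apply: mDs_bigcup => v _; apply: mDs_bigcup => n _.
  apply: mDsI; last first.
    have -> : [set w | (if (u == v) || (u == W v n w) then SZero else cfg k w u) = s] =
      \bigcup_(x in [set: V]) ([set w | W v n w = x] `&`
        (if (u == v) || (u == x) then [set _ | SZero = s] else [set w | cfg k w u = s])).
      apply: set_ext => w; split; first move=> h.
        have {}h : (if (u == v) || (u == W v n w) then SZero else cfg k w u) = s by exact h.
        by exists (W v n w) => //; split => //; move: h; case: ifP => _ hh; exact hh.
      move=> [x _ [<-]] hh.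
      change ((if (u == v) || (u == W v n w) then SZero else cfg k w u) = s).
      by move: hh; case: ifP => _ hh; exact hh.
    apply: mDs_bigcup => x _; apply: mDsI; first exact: mDs_meas.
    by case: ifP => _; [exact/mDs_meas/mprop|exact: IH].
  apply: mDsI; last by apply: mDs_bigcap => j _; apply: mDsC; exact: mDs_comp.
  apply: mDsI; [exact: mDs_minball|exact: mDs_comp].
Qed.


Lemma mDs_eq X Y : (forall w, D w -> (X w <-> Y w)) -> mDs Y -> mDs X.
Proof.
move=> h mY; rewrite /mDs (_ : D `&` X = D `&` Y) //.
by apply: set_ext => w; split => -[Dw hw]; split => //; apply/(h w Dw).
Qed.

Lemma mAt_eq (t : R) (F : {fset V}) :
  measurable [set w | [set v | init v w = SBall /\ C v w <= t] = [set` F]].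
Proof.
have -> : [set w | [set v | init v w = SBall /\ C v w <= t] = [set` F]] =
  \bigcap_(v in [set: V]) (if v \in F
     then [set w | init v w = SBall] `&` [set w | C v w <= t]
     else ~` ([set w | init v w = SBall] `&` [set w | C v w <= t])).
  apply: set_ext => w; split.
    move=> e v _; case: ifP => vF.
      by have : [set` F] v by []; rewrite -e.
    by move=> hv; have : [set v | init v w = SBall /\ C v w <= t] v by [];
      rewrite e /= vF.
  move=> h; apply: set_ext => v /=; have := h v I; case: ifP => vF.
    by split.
  by split => // hv; exfalso; apply: (h v I).
apply: bigcap_count_measurable => v _; case: ifP => _.
  by apply: measurableI; [exact: initm|exact: mClet].
by apply: measurableC; apply: measurableI; [exact: initm|exact: mClet].
Qed.

Lemma mDs_nact (t : R) k : mDs [set w | nactivated init C w t = k].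
Proof.
apply: (@mDs_eq _ (\bigcup_(F in [set F : {fset V} | size F = k])
   [set w | [set v | init v w = SBall /\ C v w <= t] = [set` F]])); last first.
  by apply: mDs_bigcup => F _; exact/mDs_meas/mAt_eq.
move=> w Dw.
have finA : finite_set [set v | init v w = SBall /\ C v w <= t].
  by apply: sub_finite_set Dw.1 => v [].
rewrite /nactivated; split.
  by move=> h; exists (fset_set [set v | init v w = SBall /\ C v w <= t]) => //=;
    rewrite fset_setK.
by move=> [F /= sF ->]; rewrite set_fsetK.
Qed.

Lemma golf_meas (t : R) v s : measurable [set w | golf init C W w t v = s].
Proof.
have -> : [set w | golf init C W w t v = s] =
  (D `&` \bigcup_(k in [set: nat])
     ([set w | nactivated init C w t = k] `&` [set w | cfg k w v = s]))
  `|` (~` D `&` [set _ | SStar = s]).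
  apply: set_ext => w; case: (pselect (well_defined init C w)) => wd.
    rewrite /= golf_wd //; split.
      by move=> h; left; split => //; exists (nactivated init C w t).
    case=> [[_ [k _ [hk hc]]]|[]] //.
    by rewrite hk; exact: hc.
  rewrite /= golf_nwd //; split; first by move=> h; right.
  by case=> [[]|[]].
apply: measurableU; first by apply: mDs_bigcup => k _; apply: mDsI;
  [exact: mDs_nact|exact: cfgM_all].
by apply: measurableI; [exact/measurableC/mD|exact: mprop].
Qed.

End Meas.

End PartD.
Import PartD.

Local Open Scope card_scope.

Lemma valid_gen (R : realType) (V : countType) (P : V -> V -> R)
  (d : measure_display) (Omega : measurableType d) (Pr : probability Omega R)
  (init : V -> Omega -> site) (C : V -> Omega -> R) (W : V -> nat -> Omega -> V) :
  (forall u v, (0 <= P u v)%R) ->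
  irreducible P -> recurrent P -> golf_process Pr init C W P ->
  {ae Pr, forall w, finite_set (B0 init w) /\ B0 init w #<= H0 init w} ->
  valid Pr init C W.
Proof.
move=> P0 irr rec [nS [initm [Cm [C01 [aedist [Wm [Wlaw _]]]]]]] hB.
split.
  by move=> t _ v s; exact: golf_meas.
have H1 := ae_hit_all P0 Wm Wlaw rec irr.
move: aedist hB H1; apply: filterS3 => w dist [fin le] hit.
have wd : well_defined init C w by split.
split => //; split; first by move=> v; exact: not_frozen.
by move=> v; exact: golf_cadlag.
Qed.

Theorem mainTheorem8 (R : realType) :
  (forall (V : finType) (E : rel V) (P : V -> V -> R)
     (d : measure_display) (Omega : measurableType d) (Pr : probability Omega R)
     (init : V -> Omega -> site) (C : V -> Omega -> R) (W : V -> nat -> Omega -> V),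
     graph_rel E -> connected_graph E -> transition_on E P ->
     irreducible P -> recurrent P ->
     golf_process Pr init C W P ->
     {ae Pr, forall w, B0 init w #<= H0 init w} ->
     valid Pr init C W)
  /\
  (forall (V : countType) (E : rel V) (P : V -> V -> R)
     (d : measure_display) (Omega : measurableType d) (Pr : probability Omega R)
     (init : V -> Omega -> site) (C : V -> Omega -> R) (W : V -> nat -> Omega -> V),
     ~ finite_set [set: V] ->
     graph_rel E -> connected_graph E -> transition_on E P ->
     irreducible P -> recurrent P ->
     golf_process Pr init C W P ->
     {ae Pr, forall w, finite_set (B0 init w) /\ B0 init w #<= H0 init w} ->
     valid Pr init C W).
Proof.
split.
  move=> V E P d Omega Pr init C W _ _ tr irr rec gp hB.
  apply: valid_gen tr.1 irr rec gp _.
  by apply: filterS hB => w le; split => //; exact: finite_finset.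
move=> V E P d Omega Pr init C W _ _ _ tr irr rec gp hB.
exact: valid_gen tr.1 irr rec gp hB.
Qed.
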